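(* Let $(G,c)\in P_m$. Then: (1) the number of faces of $G$ of either color is at most $m-2$; (2) the number of connected components of $G$ is at most $\lfloor m/3\rfloor$; (3) $\sum_{f\in F}(l_f-1)\le \frac m3$, where $F$ is the set of all faces of $G$.
   Context: $P_m$ is the set of pairs $(G,c)$ where $G$ is a simple graph on $m$ vertices with no isolated vertices, embedded in the $2$-sphere, and $c$ is a coloring of the faces of $G$ in black and white such that every edge bounds exactly one white face and exactly one black face. For a face $f$, $l_f$ denotes the number of connected components of $G$ that the face $f$ touches (i.e. the number of boundary components of $f$). *)

(* Defs.v *)
(* Combinatorial-map encoding of graphs embedded in the 2-sphere. *)
From mathcomp Require Import all_boot.
Set Implicit Arguments. Unset Strict Implicit. Unset Printing Implicit Defensive.

Section EmbeddedGraph.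
Variable D : finType.           (* darts = half-edges *)
Variables (sigma alpha : D -> D).
(* sigma : rotation around vertices; alpha : edge involution *)

(* face-traversal permutation: facial walks are its orbits *)
Definition phi (d : D) : D := sigma (alpha d).

Definition gadj : rel D := fun x y => (y == sigma x) || (y == alpha x).

(* number of classes of the equivalence relation connect e (e symmetric-closure
   is automatic here since sigma, alpha are permutations of a finite set) *)
Definition ncls (e : rel D) : nat := #|[set root e x | x : D]|.

Definition ncls_in (e : rel D) (C : {set D}) : nat := #|[set root e x | x in C]|.

Definition n_vertices := ncls (frel sigma).
Definition n_edges := ncls (frel alpha).
Definition n_walks := ncls (frel phi).
Definition n_components := ncls gadj.

Definition component (x : D) : {set D} := [set y | connect gadj x y].

(* a rotation system describing a simple graph, each connected component
   being embedded in the sphere (Euler characteristic 2) *)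
Definition simple_plane_rotation_system : Prop :=
  [/\ injective sigma /\ (forall d, alpha (alpha d) = d),
      (forall d, alpha d != d),
      (* no loops *)
      (forall d, ~~ fconnect sigma d (alpha d)),
      (* no multiple edges *)
      (forall d d', fconnect sigma d d' -> fconnect sigma (alpha d) (alpha d') -> d = d')
    & (* each component is a genus-0 map: V - E + W = 2 *)
      (forall x, ncls_in (frel sigma) (component x) + ncls_in (frel phi) (component x)
                 = ncls_in (frel alpha) (component x) + 2)].

(* Faces of the whole (possibly disconnected) embedding: each face is a set of
   facial walks, at most one from each component, and the bipartite incidence
   graph (components -- faces) is a tree. *)
Definition sphere_faces (Fc : finType) (face : D -> Fc) : Prop :=
  [/\ (forall f, exists d, face d = f),
      (forall d, face (phi d) = face d),
      (forall d d', face d = face d' -> connect gadj d d' -> fconnect phi d d'),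
      (* incidence graph connected *)
      (forall d d', connect (fun x y => gadj x y || (face x == face y)) d d')
    & (* incidence graph has (#comps + #faces - 1) edges, i.e. is a tree *)
      #|Fc| + n_components = n_walks + 1].

(* l_f : number of connected components of G touched by the face f *)
Definition nbound (Fc : finType) (face : D -> Fc) (f : Fc) : nat :=
  #|[set root gadj d | d : D & face d == f]|.

Definition in_P (m : nat) (Fc : finType) (face : D -> Fc) (color : Fc -> bool) : Prop :=
  [/\ simple_plane_rotation_system,
      sphere_faces face,
      n_vertices = m,
      0 < m
    & (* every edge bounds exactly one white and one black face *)
      forall d, color (face d) != color (face (alpha d))].

End EmbeddedGraph.

(* Main.v *)
Require Import Defs.
From mathcomp Require Import all_boot zify.
Set Implicit Arguments. Unset Strict Implicit. Unset Printing Implicit Defensive.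

Lemma fiber_count (D : finType) (R S : {set D}) (p : D -> D) k :
  (forall x, x \in S -> p x \in R) ->
  (forall r, r \in R -> k <= #|[set x in S | p x == r]|) ->
  k * #|R| <= #|S|.
Proof.
move=> pSR hk.
rewrite -[#|S|]sum1_card (partition_big p (mem R)) //=.
rewrite mulnC -sum_nat_const.
apply: leq_sum => r rR.
apply: leq_trans (hk r rR) _.
rewrite -sum1_card; apply: eq_leq; apply: eq_bigl => x; by rewrite inE.
Qed.

Lemma connect_closed_set (D : finType) (e : rel D) (S : {set D}) :
  (forall x y, e x y -> x \in S -> y \in S) ->
  forall x y, connect e x y -> x \in S -> y \in S.
Proof.
move=> cl x y /connectP [p pth ->] {y}.
elim: p x pth => //= z p IH x /andP [exz pth] xS.
exact: IH pth (cl _ _ exz xS).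
Qed.

Section Main.
Variables (D : finType) (sigma alpha : D -> D) (Fc : finType) (face : D -> Fc)
  (color : Fc -> bool).
Hypothesis sinj : injective sigma.
Hypothesis aa : forall d, alpha (alpha d) = d.
Hypothesis noloop : forall d, ~~ fconnect sigma d (alpha d).
Hypothesis nomulti : forall d d', fconnect sigma d d' -> fconnect sigma (alpha d) (alpha d') -> d = d'.
Hypothesis fphi : forall d, face (phi sigma alpha d) = face d.
Hypothesis col : forall d, color (face d) != color (face (alpha d)).

Local Notation phi := (phi sigma alpha).
Local Notation gadj := (gadj sigma alpha).

Lemma ainj : injective alpha. Proof. exact: can_inj aa. Qed.
Lemma phinj : injective phi. Proof. by move=> x y /sinj /ainj. Qed.

Lemma col_alpha d : color (face (alpha d)) = ~~ color (face d).
Proof. by move: (col d); case: (color _); case: (color _). Qed.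

Lemma sigma_face d : face (sigma d) = face (alpha d).
Proof. by rewrite -[in RHS]fphi /Defs.phi aa. Qed.

Lemma sigma_neq d : sigma d != d.
Proof.
apply/eqP => h; move: (col d); rewrite -sigma_face h. by rewrite eqxx.
Qed.

Lemma gadj_rev x y : gadj x y -> connect gadj y x.
Proof.
case/orP => /eqP ->.
  have : fconnect sigma (sigma x) x by rewrite fconnect_sym // fconnect1.
  apply: connect_sub => a b /eqP <-; apply: connect1; by rewrite /Defs.gadj eqxx.
by apply: connect1; rewrite /Defs.gadj aa eqxx orbT.
Qed.

Lemma gadj_sym : connect_sym gadj.
Proof.
have H : forall x y, connect gadj x y -> connect gadj y x.
  move=> x y /connectP [p pth ->] {y}.
  elim: p x pth => //= z p IH x /andP [gxz pth].
  exact: connect_trans (IH _ pth) (gadj_rev gxz).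
by move=> x y; apply/idP/idP; apply: H.
Qed.

Lemma sub_sigma : subrel (connect (frel sigma)) (connect gadj).
Proof. apply: connect_sub => x y /eqP <-; apply: connect1; by rewrite /Defs.gadj eqxx. Qed.
Lemma sub_alpha : subrel (connect (frel alpha)) (connect gadj).
Proof. apply: connect_sub => x y /eqP <-; apply: connect1; by rewrite /Defs.gadj eqxx orbT. Qed.
Lemma sub_phi : subrel (connect (frel phi)) (connect gadj).
Proof.
apply: connect_sub => x y /eqP <-.
have h1 : gadj x (alpha x) by rewrite /Defs.gadj eqxx orbT.
have h2 : gadj (alpha x) (phi x) by rewrite /Defs.gadj /Defs.phi eqxx.
exact: connect_trans (connect1 h1) (connect1 h2).
Qed.

Definition Rg := [set root gadj x | x : D].

Lemma ncls_split (e : rel D) : subrel (connect e) (connect gadj) ->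
  ncls e = \sum_(r in Rg) ncls_in e (component sigma alpha r).
Proof.
move=> sube.
rewrite /ncls -sum1_card (partition_big (root gadj) (mem Rg)); last first.
  by move=> y _; apply: imset_f.
apply: eq_bigr => r /imsetP [z _ ->].
rewrite /ncls_in -sum1_card; apply: eq_bigl => y.
apply/andP/imsetP.
  case=> /imsetP [x _ ->] /eqP hr; exists x => //.
  rewrite /component inE.
  have cx : connect gadj x (root e x) := sube _ _ (connect_root _ _).
  have : connect gadj (root e x) z by apply/(rootP gadj_sym).
  move=> h; rewrite gadj_sym.
  exact: connect_trans (connect_trans cx h) (connect_root _ z).
case=> x; rewrite /component inE => hx ->; split; first exact: imset_f.
apply/eqP/(rootP gadj_sym).
have c1 : connect gadj (root e x) x by rewrite gadj_sym; exact: sube _ _ (connect_root _ _).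
have c2 : connect gadj x (root gadj z) by rewrite gadj_sym.
have c3 : connect gadj (root gadj z) z by rewrite gadj_sym; exact: connect_root.
exact: connect_trans (connect_trans c1 c2) c3.
Qed.

Lemma phi_neq d : phi d != d.
Proof.
apply/negP => /eqP h; move: (noloop d).
have : fconnect sigma (alpha d) d by rewrite -{2}h; exact: fconnect1.
by rewrite fconnect_sym // => ->.
Qed.

Lemma phi2_neq d : phi (phi d) != d.
Proof.
apply/negP => /eqP h; move: h; rewrite /Defs.phi => h.
set e := alpha d.
have h' : sigma (alpha (sigma e)) = alpha e by rewrite /e aa.
have := nomulti (d := sigma e) (d' := e).
rewrite fconnect_sym // fconnect1 -h' fconnect1 => /(_ isT isT) /eqP.
by rewrite (negbTE (sigma_neq e)).
Qed.

Lemma alpha_orb x y : fconnect alpha x y -> (y == x) || (y == alpha x).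
Proof.
move=> cxy.
have := @connect_closed_set _ (frel alpha) [set x; alpha x] _ x y cxy.
rewrite !inE eqxx; apply => //.
move=> a b /eqP <-; rewrite !inE => /orP [] /eqP ->; by rewrite ?aa eqxx ?orbT.
Qed.

Lemma phisym : connect_sym (frel phi).
Proof. move=> x y; exact: (fconnect_sym phinj). Qed.

Definition Wset (S : {set D}) := [set root (frel phi) x | x in S].

Lemma walk3 (S : {set D}) : (forall x, x \in S -> phi x \in S) -> 3 * #|Wset S| <= #|S|.
Proof.
move=> cl; apply: (fiber_count (p := root (frel phi))).
  by move=> x xS; apply: imset_f.
move=> r /imsetP [x0 x0S ->].
set r0 := root _ x0.
have clS : forall a b, fconnect phi a b -> a \in S -> b \in S.
  apply: connect_closed_set => a b /eqP <-; exact: cl.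
have r0S : r0 \in S := clS _ _ (connect_root _ _) x0S.
have rr : root (frel phi) r0 = r0 by rewrite root_root //; exact: phisym.
have rp : forall y, root (frel phi) (phi y) = root (frel phi) y.
  move=> y; apply/esym/(rootP phisym); exact: fconnect1.
apply: leq_trans (_ : #|[:: r0; phi r0; phi (phi r0)]| <= _).
  have -> : #|[:: r0; phi r0; phi (phi r0)]| = 3.
    apply/card_uniqP; rewrite /= !inE negb_or !andbT.
    by rewrite (eq_sym r0) (phi_neq r0) (eq_sym r0) (phi2_neq r0) eq_sym (phi_neq (phi r0)).
  by [].
apply/subset_leq_card/subsetP => y; rewrite !inE => /or3P [] /eqP ->.
- by rewrite r0S rr eqxx.
- by rewrite cl // rp rr eqxx.
- by rewrite !cl // !rp rr eqxx.
Qed.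

Definition Db b := [set x | color (face x) == b].

Lemma asym : connect_sym (frel alpha).
Proof. move=> x y; exact: (fconnect_sym ainj). Qed.

Lemma Db_E b : #|Db b| = n_edges alpha.
Proof.
rewrite /n_edges /ncls.
have -> : [set root (frel alpha) x | x : D] = root (frel alpha) @: Db b.
  apply/setP => y; apply/imsetP/imsetP; last by case=> x _ ->; exists x.
  case=> z _ ->.
  case hz: (color (face z) == b); first by exists z; rewrite // inE hz.
  exists (alpha z); first by rewrite inE col_alpha; move: hz; case: (color _); case: b.
  apply/(rootP asym); rewrite -{2}(aa z); rewrite !aa; apply: connect1; exact: eqxx.
rewrite card_in_imset // => x y; rewrite !inE => /eqP hx /eqP hy /(rootP asym) /alpha_orb.
case/orP => /eqP // hyx; move: hy; rewrite hyx col_alpha hx; by case: b {hx hyx}.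
Qed.

Lemma D_2E : #|D| = 2 * n_edges alpha.
Proof.
rewrite -(cardsC (Db true)) -(Db_E true).
have -> : ~: Db true = alpha @: Db true.
  apply/setP => y; rewrite !inE; apply/idP/imsetP.
    move=> hy; exists (alpha y); last by rewrite aa.
    by rewrite inE col_alpha; move: hy; case: (color _).
  by case=> x; rewrite inE => hx ->; rewrite col_alpha (eqP hx).
by rewrite card_imset //; [lia | exact: ainj].
Qed.

Lemma Euler_sum :
  simple_plane_rotation_system sigma alpha ->
  n_vertices sigma + n_walks sigma alpha = n_edges alpha + 2 * n_components sigma alpha.
Proof.
case=> _ _ _ _ eul.
rewrite /n_vertices /n_walks /n_edges /n_components.
rewrite (ncls_split sub_sigma) (ncls_split sub_phi) (ncls_split sub_alpha).
rewrite -big_split /=.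
rewrite (eq_bigr (fun r => ncls_in (frel alpha) (component sigma alpha r) + 2)); last first.
  by move=> r _; rewrite eul.
rewrite big_split /= sum_nat_const /ncls /Rg; lia.
Qed.

Lemma W3 : 3 * n_walks sigma alpha <= #|D|.
Proof.
have -> : n_walks sigma alpha = #|Wset setT|.
  rewrite /n_walks /ncls /Wset; apply: eq_card => y.
  by apply/imsetP/imsetP; case=> x _ ->; exists x.

rewrite -cardsT; apply: walk3 => x; by rewrite !inE.
Qed.

Lemma Wb3 b : 3 * #|Wset (Db b)| <= #|Db b|.
Proof. apply: walk3 => x; by rewrite !inE fphi. Qed.

Lemma c_Wb b : n_components sigma alpha <= #|Wset (Db b)|.
Proof.
rewrite /n_components /ncls.
apply: leq_trans (leq_imset_card (root gadj) (Wset (Db b))).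
apply/subset_leq_card/subsetP => y /imsetP [z _ ->].
have rr : forall x, root gadj (root (frel phi) x) = root gadj x.
  move=> x; apply/esym/(rootP gadj_sym); exact: sub_phi (connect_root _ _).
case hz: (color (face z) == b).
  apply/imsetP; exists (root (frel phi) z); last by rewrite rr.
  by apply: imset_f; rewrite inE hz.
apply/imsetP; exists (root (frel phi) (alpha z)).
  by apply: imset_f; rewrite inE col_alpha; move: hz; case: (color _); case: b.
rewrite rr; apply/(rootP gadj_sym); rewrite gadj_sym; apply: connect1.
by rewrite /Defs.gadj aa eqxx orbT.
Qed.

Lemma face_root x : face (root (frel phi) x) = face x.
Proof.
have : fconnect phi x (root (frel phi) x) := connect_root _ _.
move=> /connectP [p pth ->]; elim: p x pth => //= z p IH x /andP [/eqP <- pth].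
by rewrite (IH _ pth) fphi.
Qed.

Lemma Fb_Wb b : (forall f, exists d, face d = f) ->
  #|[set f : Fc | color f == b]| <= #|Wset (Db b)|.
Proof.
move=> fs; apply: leq_trans (leq_imset_card face (Wset (Db b))).
apply/subset_leq_card/subsetP => f; rewrite inE => hf.
have [d hd] := fs f.
apply/imsetP; exists (root (frel phi) d); last by rewrite face_root.
by apply: imset_f; rewrite inE hd.
Qed.

Lemma nbound_sum :
  \sum_(f : Fc) nbound sigma alpha face f <= n_walks sigma alpha.
Proof.
rewrite /n_walks /ncls -sum1_card (partition_big face predT) //=.
apply: leq_sum => f _.
rewrite sum1_card /nbound.
set A := [set r in [set root (frel phi) x | x : D] | face r == f].
apply: (@leq_trans #|root gadj @: A|); last first.
  apply: leq_trans (leq_imset_card _ _) _.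
  by apply/subset_leq_card/subsetP => y; rewrite !inE.
apply/subset_leq_card/subsetP => y /imsetP [d]; rewrite inE => /eqP hd ->.
apply/imsetP; exists (root (frel phi) d).
  by rewrite inE imset_f //= face_root hd.
apply/(rootP gadj_sym); exact: sub_phi (connect_root _ _).
Qed.

Lemma nbound_pos f : (exists d, face d = f) -> 0 < nbound sigma alpha face f.
Proof.
case=> d hd; apply/card_gt0P; exists (root gadj d); apply: imset_f; by rewrite inE hd.
Qed.
End Main.

Theorem proposition2p2 (m : nat) (D : finType) (sigma alpha : D -> D)
    (Fc : finType) (face : D -> Fc) (color : Fc -> bool) :
  in_P sigma alpha m face color ->
  [/\ (forall b : bool, #|[set f : Fc | color f == b]| + 2 <= m),
      n_components sigma alpha <= m %/ 3
    & 3 * (\sum_(f : Fc) (nbound sigma alpha face f - 1)) <= m].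
Proof.
case=> sprs sf hm m0 col.
have sprs' := sprs.
case: sprs' => [[sinj aa]] anf noloop nomulti eul.
case: sf => fs fphi _ _ tree.
have eu := Euler_sum sinj aa sprs.
rewrite hm in eu.
have w3 := W3 sinj aa noloop nomulti fphi col.
have d2 := D_2E aa col.
have c1 : 0 < n_components sigma alpha.
  move: m0; rewrite -hm /n_vertices /ncls => /card_gt0P [y /imsetP [x _ _]].
  apply/card_gt0P; exists (root (gadj sigma alpha) x); exact: imset_f.
have key : forall b : bool,
    #|Wset sigma alpha (Db face color b)| + 2 * n_components sigma alpha <= m.
  move=> b.
  have := Wb3 sinj aa noloop nomulti fphi col b.
  rewrite (Db_E aa col b). lia.
have hc : 3 * n_components sigma alpha <= m.
  have := key true; have := c_Wb (face:=face) (color:=color) sinj aa col true; lia.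
split.
- move=> b; have := key b; have := Fb_Wb color fphi b fs; lia.
- rewrite leq_divRL //; lia.
- have hs := nbound_sum (face:=face) sinj aa fphi.
  have hsum : \sum_(f : Fc) (nbound sigma alpha face f - 1) + #|Fc|
              = \sum_(f : Fc) nbound sigma alpha face f.
    rewrite -sum1_card -big_split /=; apply: eq_bigr => f _.
    have := nbound_pos sigma alpha (fs f); lia.
  rewrite /n_walks in hs tree eu w3 |- *. lia.
Qed.
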